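(* Let $u\in\mathbb{R}$, $q=Q_v(u)$, $r=\mathcal{S}(U(u))$, $e=u-\sup\{T_n^0:T_n^0\le u\}$, $z^+=(q,r,e)$ and $z^-=(0,0,e)$. Then for all $t\ge u$, \[ Q_u(t-u;z^-)\le Q_u(t-u;z^+)\le Q_v(t).\]
   Context: Let $c\ge1$. Let $G,F$ be CDFs of strictly positive random variables $A$ (interarrival) and $V$ (service), $\lambda=1/E[A]$, $\mu=1/E[V]$, $\lambda<c\mu$. Let $\mathcal{T}^0=\{T_n^0:n\in\mathbb{Z}\setminus\{0\}\}$ be a time-stationary renewal point process with inter-renewal CDF $G$, indexed $\dots<T_{-1}^0<0<T_1^0<\dots$. Let $\mathcal{T}^i=\{T_n^i\}$, $i=1,\dots,c$, be i.i.d. time-stationary renewal processes with inter-renewal CDF $F$, independent of $\mathcal{T}^0$; $V_k^i=T_k^{i,+}-T_k^i$ where $T_k^{i,+}$ is the next point after $T_k^i$. $U^i(t)=\inf\{T_n^i:T_n^i>t\}-t$, $U(t)=(U^1(t),\dots,U^c(t))$; $\mathcal{S}$ sorts ascending. Vacation system: customers arrive at the points of $\mathcal{T}^0$ and wait in a FCFS queue; at each point $T_k^i$, if the queue is nonempty just before, the head customer leaves the queue and is served by server $i$ for time $V_k^i$, otherwise server $i$ takes a vacation of length $V_k^i$. Its stationary number waiting in queue is $Q_v(t)=\sup_{s\le t}\big(|(s,t]\cap\mathcal{T}^0|-\sum_{i=1}^c|(s,t]\cap\mathcal{T}^i|\big)$. The customer arriving at $T_n^0$ leaves this queue at some point $T_k^{i(n)}$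 and is assigned service time $V_n:=V_k^{i(n)}$. For $u\in\mathbb{R}$ and $z=(q,r,e)$ ($q\in\mathbb{Z}_{\ge0}$, $r\in\mathbb{R}_{\ge0}^c$ ascending, $e\ge0$), $Q_u(t;z)$, $t\ge0$, is the number of customers waiting in queue at time $u+t$ in a FCFS $c$-server queue which at time $u$ has $q$ customers waiting, sorted remaining service times $r$ at the servers and time $e$ since the last arrival, and which is fed by the customers arriving at $T_n^0\in(u,u+t]$ with service times $V_n$. *)

(* Defs.v *)
From mathcomp Require Import all_boot all_order all_algebra.
From mathcomp Require Import boolp classical_sets reals.
Set Implicit Arguments. Unset Strict Implicit. Unset Printing Implicit Defensive.
Import Order.TTheory GRing.Theory Num.Theory.
Local Open Scope ring_scope.
Local Open Scope classical_set_scope.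

Section QueueDefs.
Variable R : realType.

(* A (sample path of a) simple point process on R, listed increasingly by
   integer indices: strictly increasing and unbounded in both directions
   (hence locally finite). *)
Definition point_process (T : int -> R) : Prop :=
  (forall n m : int, n < m -> T n < T m) /\
  (forall x : R, exists n, x < T n) /\
  (forall x : R, exists n, T n < x).

Definition last_idx (T : int -> R) (t : R) : int :=
  xget 0 [set n : int | T n <= t < T (n + 1)].

(* |(s,t] ∩ T| for s <= t. *)
Definition cnt (T : int -> R) (s t : R) : int := last_idx T t - last_idx T s.

Definition resid (T : int -> R) (t : R) : R := T (last_idx T t + 1) - t.

Variable c : nat.
Variables (T0 : int -> R) (T : 'I_c -> int -> R).

Definition netput (s t : R) : int := cnt T0 s t - \sum_(i < c) cnt (T i) s t.

(* k is the supremum (attained, as a maximum) of netput (s,t] over s <= t *)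
Definition is_Qv (t : R) (k : int) : Prop :=
  (exists s, s <= t /\ k = netput s t) /\ (forall s, s <= t -> netput s t <= k).

Definition Qv (t : R) : int := xget 0 [set k | is_Qv t k].

(* The customer arriving at T0 n leaves the vacation queue at time tau:
   the first time after its arrival at which the queue content is no larger
   than the number of later arrivals (FCFS). *)
Definition leaves_at (n : int) (tau : R) : Prop :=
  T0 n < tau /\ Qv tau <= cnt T0 (T0 n) tau /\
  (forall tau', T0 n < tau' < tau -> cnt T0 (T0 n) tau' < Qv tau').

Definition Vserv (n : int) : R :=
  xget 0 [set v | exists (i : 'I_c) (k : int),
                    leaves_at n (T i k) /\ v = T i (k + 1) - T i k].

(* FCFS c-server queue, Kiefer-Wolfowitz style: F = absolute times at which
   the servers become free; customers (a, v) (arrival time, service time)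
   in FCFS order; returns the times at which customers enter service. *)
Fixpoint fcfs_starts (F : seq R) (cs : seq (R * R)) : seq R :=
  match cs with
  | [::] => [::]
  | (a, v) :: cs' =>
      let F1 := sort <=%R F in
      let s := Num.max a (head 0 F1) in
      s :: fcfs_starts (s + v :: behead F1) cs'
  end.

(* Q_u(t; z), z = (q, r, e): number of customers waiting in queue at time u+t
   in the FCFS c-server queue which at time u has q customers waiting (the
   q most recent arrivals up to time u, carrying their service times V_n),
   remaining service times r at the servers (server free at u + r_i) and
   time e since the last arrival, fed by the customers arriving at
   T0 n in (u, u+t] with service times V_n. *)
Definition Qstd (u : R) (q : nat) (r : seq R) (e : R) (t : R) : nat :=
  let nu := last_idx T0 u in
  let init := [seq (u, Vserv (nu - q%:Z + 1 + k%:Z)) | k <- iota 0 q] in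
  let arr := [seq (T0 (nu + 1 + k%:Z), Vserv (nu + 1 + k%:Z))
             | k <- iota 0 `|last_idx T0 (u + t) - nu|%N] in
  let starts := fcfs_starts [seq u + x | x <- r] (init ++ arr) in
  count (fun s => u + t < s) starts.

End QueueDefs.

(* Main.v *)
Require Import Defs.
From mathcomp Require Import all_boot all_order all_algebra.
From mathcomp Require Import boolp classical_sets reals.
From mathcomp Require Import zify ring lra.
Import Order.TTheory GRing.Theory Num.Theory.
Local Open Scope ring_scope.
Set Implicit Arguments. Unset Strict Implicit. Unset Printing Implicit Defensive.

Section Greedy.
Variable R : realType.
Implicit Types (F G : seq R) (x y : R).

Definition cle y (s : seq R) : nat := count (fun f => f <= y) s.

Lemma head_sort_le F x : x \in F -> head 0 (sort <=%R F) <= x.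
Proof.
move=> xF.
have : x \in sort <=%R F by rewrite mem_sort.
have := sort_le_sorted F.
case: (sort <=%R F) => [//|h l] /= /le_path_min /allP Hall.
rewrite inE => /orP [/eqP -> //| /Hall //].
Qed.

Lemma cle_behead_sort y F : F != [::] ->
  cle y (behead (sort <=%R F)) = (cle y F - nat_of_bool (head 0 (sort <=%R F) <= y)%R)%N.
Proof.
move=> F0; rewrite /cle -(count_sort <=%R _ F).
have : sort <=%R F != [::].
  by apply: contra F0 => /eqP/(congr1 size); rewrite size_sort => /eqP; rewrite size_eq0.
case: (sort <=%R F) => [//|h l] _ /=; case: (h <= y)%R => /=; lia.
Qed.

Lemma step F G G' (sg s a v : R) :
  (forall y, sg <= y -> (cle y G <= cle y F)%N) ->
  sg <= s -> a <= s -> (exists2 g, g \in G & g <= s) ->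
  (forall y, s <= y -> (cle y G' + 1 <= cle y G + nat_of_bool (s + v <= y)%R)%N) ->
  Num.max a (head 0 (sort <=%R F)) <= s /\
  forall y, s <= y -> (cle y G' <= cle y ((Num.max a (head 0 (sort <=%R F)) + v
                                 :: behead (sort <=%R F))%R))%N.
Proof.
move=> Hinv hs ha [g gG gs] HG'.
have c1 : (0 < cle s G)%N by rewrite /cle -has_count; apply/hasP; exists g.
have c2 : (0 < cle s F)%N by apply: leq_trans c1 (Hinv _ hs).
have [f fF fs] : exists2 f, f \in F & f <= s by apply/hasP; rewrite has_count.
have F0 : F != [::] by apply/eqP => F0; rewrite F0 in fF.
have hd : head 0 (sort <=%R F) <= s by exact: (le_trans (head_sort_le fF) fs).
have hmax : Num.max a (head 0 (sort <=%R F)) <= s by rewrite ge_max ha hd.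
split => // y sy.
rewrite [cle y (_ :: _)]/cle /= -/(cle y _) cle_behead_sort //.
have -> : (head 0 (sort <=%R F) <= y) = true by apply: le_trans hd sy.
have H1 := HG' y sy.
have H2 := Hinv y (le_trans hs sy).
have H3 : (s + v <= y) -> (Num.max a (head 0 (sort <=%R F)) + v <= y).
  by move=> h; apply: le_trans h; rewrite lerD2r.
move: H1 H2 H3; case: (s + v <= y); case: (_ + v <= y) => //= H1 H2 H3; try lia.
Qed.

Lemma size_fcfs F cs : size (fcfs_starts F cs) = size cs.
Proof. by elim: cs F => [|[a v] cs IH] F //=; rewrite IH. Qed.

Fixpoint fstate F (cs : seq (R * R)) : seq R :=
  match cs with
  | [::] => F
  | (a, v) :: cs' =>
      let F1 := sort <=%R F in
      let s := Num.max a (head 0 F1) in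
      fstate (s + v :: behead F1) cs'
  end.

Lemma fcfs_cat F xs ys :
  fcfs_starts F (xs ++ ys) = fcfs_starts F xs ++ fcfs_starts (fstate F xs) ys.
Proof. by elim: xs F => [|[a v] xs IH] F //=; rewrite IH. Qed.

Lemma cmp (cs : seq (R * R)) : forall F (sg : R) (s : nat -> R) (Gs : nat -> seq R),
  (forall y, sg <= y -> (cle y (Gs 0%N) <= cle y F)%N) ->
  sg <= s 0%N ->
  (forall j, (j < size cs)%N ->
     [/\ (nth (0,0) cs j).1 <= s j, ((j.+1 < size cs)%N -> s j <= s j.+1),
         (exists2 g, g \in Gs j & g <= s j) &
         forall y, s j <= y -> (cle y (Gs j.+1) + 1 <= cle y (Gs j) + nat_of_bool (s j + (nth (0,0) cs j).2 <= y)%R)%N]) ->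
  forall j, (j < size cs)%N -> nth 0 (fcfs_starts F cs) j <= s j.
Proof.
elim: cs => [//|[a v] cs IH] F sg s Gs Hinv hs Hj.
have [ha hnext hg hG] := Hj 0%N isT.
have [hle Hinv'] := step Hinv hs ha hg hG.
case=> [_ //|j] /= hj.
apply: (IH _ (s 0%N) (fun k => s k.+1) (fun k => Gs k.+1)) => //.
- by apply: hnext; rewrite /=; lia.
- by move=> k hk; have := Hj k.+1; rewrite /=; apply.
Qed.

Lemma count_prefix (l : seq R) (p : pred R) J :
  (J <= size l)%N -> (forall j, (j < J)%N -> ~~ p (nth 0 l j)) ->
  (count p l <= size l - J)%N.
Proof.
move=> hJ Hp.
rewrite -(cat_take_drop J l) count_cat size_cat (size_takel hJ) size_drop.
have -> : count p (take J l) = 0%N.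
  apply/eqP; rewrite -leqn0 leqNgt -has_count; apply/hasPn => x /(nthP 0) [j].
  rewrite (size_takel hJ) => hj <-.
  by rewrite nth_take //; apply: Hp.
rewrite add0n; apply: leq_trans (count_size _ _) _; rewrite size_drop; lia.
Qed.


Lemma head_sort_mem F : F != [::] -> head 0 (sort <=%R F) \in F.
Proof.
move=> F0; rewrite -(mem_sort <=%R).
have : sort <=%R F != [::].
  by apply: contra F0 => /eqP/(congr1 size); rewrite size_sort => /eqP; rewrite size_eq0.
by case: (sort <=%R F) => [//|h l] _; rewrite mem_head.
Qed.

Lemma behead_sort_ge F x : x \in behead (sort <=%R F) -> head 0 (sort <=%R F) <= x.
Proof.
have := sort_le_sorted F.
case: (sort <=%R F) => [//|h l] /= /le_path_min /allP Hall /Hall //.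
Qed.

Lemma size_fstate F cs : F != [::] -> size (fstate F cs) = size F.
Proof.
elim: cs F => [|[a v] cs IH] F F0 //=; rewrite IH //=.
have : sort <=%R F != [::].
  by apply: contra F0 => /eqP/(congr1 size); rewrite size_sort => /eqP; rewrite size_eq0.
by rewrite -(size_sort <=%R F); case: (sort <=%R F).
Qed.

Lemma fstate_ne0 F cs : F != [::] -> fstate F cs != [::].
Proof. by move=> F0; rewrite -size_eq0 size_fstate // size_eq0. Qed.

Lemma nth_starts cs : forall F j, (j < size cs)%N ->
  nth 0 (fcfs_starts F cs) j =
  Num.max (nth (0,0) cs j).1 (head 0 (sort <=%R (fstate F (take j cs)))).
Proof.
elim: cs => [//|[a v] cs IH] F [|j] hj //=.
by rewrite IH.
Qed.

Lemma fstate_takeS cs : forall F j, (j < size cs)%N ->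
  fstate F (take j.+1 cs) =
  nth 0 (fcfs_starts F cs) j + (nth (0,0) cs j).2
    :: behead (sort <=%R (fstate F (take j cs))).
Proof.
elim: cs => [//|[a v] cs IH] F [|j] hj //=.
  by rewrite take0.
by rewrite IH.
Qed.

Lemma starts_mono cs : forall F j, F != [::] -> (j.+1 < size cs)%N ->
  (forall k, (k.+1 < size cs)%N -> (nth (0,0) cs k).1 <= (nth (0,0) cs k.+1).1) ->
  (forall k, (k < size cs)%N -> 0 <= (nth (0,0) cs k).2) ->
  nth 0 (fcfs_starts F cs) j <= nth 0 (fcfs_starts F cs) j.+1.
Proof.
elim: cs => [//|[a v] cs IH] F j F0 hj Ha Hv.
case: j hj => [|j] hj; last first.
  rewrite [fcfs_starts _ _]/= [nth _ (_ :: _) j.+1]/= [nth _ (_ :: _) j.+2]/=.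
  apply: IH => //.
  - by move=> k hk; apply: (Ha k.+1).
  - by move=> k hk; apply: (Hv k.+1).
case: cs IH hj Ha Hv => [//|[a' v'] cs] _ _ Ha Hv /=.
have ha := Ha 0%N isT; have hv := Hv 0%N isT; rewrite /= in ha hv.
set h := head 0 (sort <=%R F).
set F' := Num.max a h + v :: behead (sort <=%R F).
have hF' : h <= head 0 (sort <=%R F').
  have : head 0 (sort <=%R F') \in F' by apply: head_sort_mem.
  rewrite inE => /orP [/eqP -> | /behead_sort_ge //].
  by rewrite -[X in X <= _]addr0; apply: lerD => //; rewrite le_max lexx orbT.
rewrite ge_max; apply/andP; split.
  by apply: le_trans ha _; rewrite le_max lexx.
by apply: le_trans hF' _; rewrite le_max lexx orbT.
Qed.

Lemma count_mono_nth (l1 l2 : seq R) (t : R) : size l1 = size l2 ->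
  (forall j, (j < size l1)%N -> nth 0 l1 j <= nth 0 l2 j) ->
  (count (fun x => (t < x)%R) l1 <= count (fun x => (t < x)%R) l2)%N.
Proof.
elim: l1 l2 => [|x l1 IH] [|y l2] //= [hs] H.
apply: leq_add; last by apply: IH => // j hj; apply: (H j.+1).
have hxy := H 0%N isT; rewrite /= in hxy.
case: (boolP (t < x)) => hx; case: (boolP (t < y)) => hy //=.
by exfalso; move: hy; rewrite -leNgt => hy; have := lt_le_trans hx (le_trans hxy hy); rewrite ltxx.
Qed.

End Greedy.

Section LastIdx.
Variable R : realType.
Variable T : int -> R.
Hypothesis hT : point_process T.

Lemma pp_lt n m : n < m -> T n < T m.
Proof. by case: hT => h _; apply: h. Qed.

Lemma pp_le n m : n <= m -> T n <= T m.
Proof. by rewrite le_eqVlt => /orP [/eqP -> //| /pp_lt /ltW]. Qed.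

Lemma pp_ltE n m : (T n < T m) = (n < m).
Proof.
apply/idP/idP; last exact: pp_lt.
by apply: contraLR; rewrite -!leNgt => /pp_le.
Qed.

Lemma pp_leE n m : (T n <= T m) = (n <= m).
Proof. by rewrite !leNgt pp_ltE. Qed.

Lemma pp_inj n m : T n = T m -> n = m.
Proof. by move=> h; apply/eqP; rewrite eq_le -!pp_leE h lexx. Qed.

Lemma li_ex t : exists n, T n <= t < T (n + 1).
Proof.
case: hT => _ [hup hdn].
have [n0 hn0] := hdn t; have [m hm] := hup t.
have hnm : n0 < m by rewrite -pp_ltE; apply: lt_trans hm.
have : forall k : nat, forall n1, T n1 <= t -> t < T (n1 + k%:Z) -> exists n, T n <= t < T (n + 1).
  elim=> [|k IH] n1 h1 h2; first by move: h2; rewrite addr0 => /(le_lt_trans h1); rewrite ltxx.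
  case: (leP (T (n1 + 1)) t) => h3.
    by apply: (IH (n1 + 1)) => //; have -> : n1 + 1 + k%:Z = n1 + k.+1%:Z by lia.
  by exists n1; rewrite h1 h3.
move/(_ `|m - n0|%N n0 (ltW hn0)); apply.
by have -> : n0 + `|m - n0|%N%:Z = m by rewrite gtz0_abs ?subr_gt0 //; lia.
Qed.

Lemma li_spec t : T (last_idx T t) <= t < T (last_idx T t + 1).
Proof. by have := xgetPex 0 (li_ex t). Qed.

Lemma li_le n t : (T n <= t) = (n <= last_idx T t).
Proof.
have /andP [h1 h2] := li_spec t.
apply/idP/idP => h.
  rewrite leNgt; apply/negP => hl.
  have : T (last_idx T t + 1) <= T n by rewrite pp_leE; move: hl; lia.
  by move=> h3; move: (le_trans h3 h); rewrite leNgt h2.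
by apply: le_trans h1; rewrite pp_leE.
Qed.

Lemma li_lt n t : (t < T n) = (last_idx T t < n).
Proof. by rewrite ltNge li_le -ltNge. Qed.

Lemma li_T n : last_idx T (T n) = n.
Proof.
apply/eqP; rewrite eq_le -li_le lexx andbT.
by rewrite -ltzD1 -li_lt pp_ltE ltzD1.
Qed.

Lemma li_mono s t : s <= t -> last_idx T s <= last_idx T t.
Proof. by move=> st; rewrite -li_le; apply: le_trans st; case/andP: (li_spec s). Qed.

Lemma li_eq n t : T n <= t < T (n + 1) -> last_idx T t = n.
Proof.
case/andP => h1 h2; apply/eqP; rewrite eq_le -li_le h1 andbT.
by move: h2; rewrite li_lt; lia.
Qed.

End LastIdx.

Section Vac.
Variable R : realType.
Variable c : nat.
Variables (T0 : int -> R) (T : 'I_c -> int -> R).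
Hypothesis hc : (0 < c)%N.
Hypothesis hT0 : point_process T0.
Hypothesis hT : forall i, point_process (T i).
Hypothesis hdis0 : forall (i : 'I_c) (n m : int), T i n <> T0 m.
Hypothesis hdis : forall (i j : 'I_c) (n m : int), i != j -> T i n <> T j m.
Hypothesis hstab : forall t : R, exists k : int, is_Qv T0 T t k.

Let N (t : R) : int := last_idx T0 t.
Let M (i : 'I_c) (t : R) : int := last_idx (T i) t.
Let SM (t : R) : int := \sum_(i < c) M i t.
Let X (t : R) : int := N t - SM t.
Let Q (t : R) : int := Qv T0 T t.
Let D (t : R) : int := N t - Q t.

Lemma netputE s t : netput T0 T s t = X t - X s.
Proof.
rewrite /netput /cnt /X /SM /N /M sumrB; ring.
Qed.

Lemma QvP t : is_Qv T0 T t (Q t).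
Proof. exact: (xgetPex 0 (hstab t)). Qed.

Lemma Q_ge s t : s <= t -> X t - X s <= Q t.
Proof. by move=> st; case: (QvP t) => _ /(_ s st); rewrite netputE. Qed.

Lemma Q_ex t : exists2 s, s <= t & Q t = X t - X s.
Proof. by case: (QvP t) => [[s [st ->]] _]; exists s; rewrite // netputE. Qed.

Lemma Q_ge0 t : 0 <= Q t.
Proof. by have := Q_ge (lexx t); rewrite subrr. Qed.

Lemma SM_mono s t : s <= t -> SM s <= SM t.
Proof. by move=> st; apply: ler_sum => i _; apply: li_mono. Qed.

Lemma N_mono s t : s <= t -> N s <= N t.
Proof. by move=> st; apply: li_mono. Qed.

Lemma D_mono s t : s <= t -> D s <= D t.
Proof.
move=> st; have [w wt Qt] := Q_ex t.
rewrite /D; suff : Q t <= Q s + N t - N s by lia.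
have hSM := SM_mono st; have hN := N_mono st.
have hQs := Q_ge0 s.
case: (leP w s) => ws.
  have := Q_ge ws; rewrite Qt /X; lia.
have hSM2 := SM_mono (ltW ws); have hSM3 := SM_mono wt.
have hN2 := N_mono (ltW ws).
rewrite Qt /X; lia.
Qed.

Lemma D_inc s t : s <= t -> D t <= D s + SM t - SM s.
Proof.
move=> st; have [w ws Qs] := Q_ex s.
have := Q_ge (le_trans ws st); rewrite /D Qs /X; lia.
Qed.


Let i0 : 'I_c := Ordinal hc.
Definition nsi x : 'I_c := [arg min_(i < i0) T i (M i x + 1)]%O.
Definition ns x : R := T (nsi x) (M (nsi x) x + 1).

Lemma ns_min x j : ns x <= T j (M j x + 1).
Proof. by rewrite /ns /nsi; case: arg_minP => // i _ /(_ j isT). Qed.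

Lemma next_gt i x : x < T i (M i x + 1).
Proof. by case/andP: (li_spec (hT i) x). Qed.

Lemma prev_le i x : T i (M i x) <= x.
Proof. by case/andP: (li_spec (hT i) x). Qed.

Lemma ns_gt x : x < ns x.
Proof. exact: next_gt. Qed.

Lemma M_between i x y : x <= y -> y < ns x -> M i y = M i x.
Proof.
move=> xy yn; apply: li_eq => //; rewrite (le_trans (prev_le i x) xy) /=.
exact: lt_le_trans yn (ns_min x i).
Qed.

Lemma M_ns_i x : M (nsi x) (ns x) = M (nsi x) x + 1.
Proof. exact: li_T. Qed.

Lemma M_ns_j x j : j != nsi x -> M j (ns x) = M j x.
Proof.
move=> jn; apply: li_eq => //; rewrite (le_trans (prev_le j x) (ltW (ns_gt x))) /=.
rewrite lt_neqAle ns_min andbT; apply/eqP => h.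
have H := @hdis j (nsi x) (M j x + 1) (M (nsi x) x + 1) jn; apply: H; rewrite -h /ns /M /=. by [].
Qed.

Lemma SM_ns x : SM (ns x) = SM x + 1.
Proof.
rewrite /SM (bigD1 (nsi x)) //= [\sum_(i < c) M i x](bigD1 (nsi x)) //= M_ns_i.
rewrite (eq_bigr (fun i => M i x)); first by lia.
by move=> j; apply: M_ns_j.
Qed.

Lemma SM_between x y : x <= y -> y < ns x -> SM y = SM x.
Proof. by move=> xy yn; apply: eq_bigr => i _; apply: M_between. Qed.

Lemma D_between x y : x <= y -> y < ns x -> D y = D x.
Proof.
move=> xy yn; apply/eqP; rewrite eq_le (D_mono xy) andbT.
move: (D_inc xy) (SM_between xy yn); lia.
Qed.

Lemma D_ns x : D (ns x) <= D x + 1.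
Proof. by have := D_inc (ltW (ns_gt x)); rewrite SM_ns; lia. Qed.


Variable u : R.
Definition P (j : nat) : R := iter j ns u.

Lemma P_S j : P j.+1 = ns (P j).
Proof. by []. Qed.

Lemma P_lt j : P j < P j.+1.
Proof. exact: ns_gt. Qed.

Lemma P_ltn j k : (j < k)%N -> P j < P k.
Proof.
elim: k => [//|k IH]; rewrite ltnS leq_eqVlt => /orP [/eqP -> | /IH h].
  exact: P_lt.
exact: lt_trans h (P_lt k).
Qed.

Lemma P_ltE j k : (P j < P k) = (j < k)%N.
Proof.
apply/idP/idP; last exact: P_ltn.
apply: contraLR; rewrite -!leqNgt -leNgt leq_eqVlt => /orP [/eqP -> //| /P_ltn /ltW //].
Qed.

Lemma P_leE j k : (P j <= P k) = (j <= k)%N.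
Proof. by rewrite leNgt P_ltE -leqNgt. Qed.

Lemma SM_P j : SM (P j) = SM u + j%:Z.
Proof.
elim: j => [|j IH]; first by rewrite addr0.
by rewrite P_S SM_ns IH; lia.
Qed.

Lemma P0 : P 0 = u.
Proof. by []. Qed.

Lemma P_locate y : u <= y -> exists j, P j <= y < P j.+1.
Proof.
move=> uy.
have ex : exists j, P j <= y by exists 0%N.
have bnd : forall j, P j <= y -> (j <= `|SM y - SM u|)%N.
  move=> j hj; have := SM_mono hj; rewrite SM_P => h.
  have : j%:Z <= SM y - SM u by lia.
  move=> h2; lia.
case: (ex_maxnP ex bnd) => j hj hmax; exists j; rewrite hj /=.
rewrite ltNge; apply/negP => h; rewrite -P_S in h; have := hmax j.+1 h; by rewrite ltnn.
Qed.

Lemma D_loc j y : P j <= y < P j.+1 -> D y = D (P j).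
Proof. by case/andP => h1 h2; apply: D_between. Qed.

Variable t : R.
Hypothesis hut : u <= t.

Definition jf (n : int) : nat :=
  xget 0%N [set j | n <= D (P j) /\ forall k, n <= D (P k) -> (j <= k)%N].

Lemma jf_spec n : n <= D t ->
  n <= D (P (jf n)) /\ forall k, n <= D (P k) -> (jf n <= k)%N.
Proof.
move=> hn; have [jt hjt] := P_locate hut.
have ex : exists k, n <= D (P k) by exists jt; rewrite -(D_loc hjt).
case: (ex_minnP ex) => m hm hmin.
by have := xgetPex 0%N (ex_intro (fun j => n <= D (P j) /\ forall k, n <= D (P k) -> (j <= k)%N) m (conj hm hmin)).
Qed.

Lemma jf_du : jf (D u) = 0%N.
Proof.
have := jf_spec (D_mono hut) => [[_ /(_ 0%N)]].
by rewrite P0 lexx => /(_ isT); rewrite leqn0 => /eqP.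
Qed.

Lemma jf_pos n : D u < n -> n <= D t -> (0 < jf n)%N.
Proof.
move=> h1 h2; have [h3 _] := jf_spec h2.
by rewrite lt0n; apply/eqP => h; move: h3; rewrite h P0 leNgt h1.
Qed.

Lemma jf_val n : D u < n -> n <= D t -> D (P (jf n)) = n.
Proof.
move=> h1 h2; have [h3 h4] := jf_spec h2.
have := jf_pos h1 h2; case E : (jf n) => [//|j] _.
have h5 : D (P j) < n.
  by rewrite ltNge; apply/negP => /h4; rewrite E ltnn.
have := D_ns (P j); rewrite -P_S; rewrite E in h3; lia.
Qed.

Lemma DP_mono j k : (j <= k)%N -> D (P j) <= D (P k).
Proof. by move=> jk; apply: D_mono; rewrite P_leE. Qed.

Lemma jf_lt n1 n2 : D u <= n1 -> n1 < n2 -> n2 <= D t -> (jf n1 < jf n2)%N.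
Proof.
move=> h1 h12 h2.
case: (eqVneq n1 (D u)) => [e|hne].
  by rewrite e in h12 *; rewrite jf_du; apply: jf_pos.
have hu1 : D u < n1 by rewrite lt_neqAle eq_sym hne h1.
have hu2 : D u < n2 by apply: lt_trans h12.
rewrite ltnNge; apply/negP => /DP_mono.
rewrite (jf_val hu1 (le_trans (ltW h12) h2)) (jf_val hu2 h2) leNgt h12 //.
Qed.

Lemma jf_le_t n : n <= D t -> P (jf n) <= t.
Proof.
move=> hn; have [jt hjt] := P_locate hut.
have [_ h4] := jf_spec hn.
have : (jf n <= jt)%N by apply: h4; rewrite -(D_loc hjt).
rewrite -P_leE => h; apply: le_trans h _; by case/andP: hjt.
Qed.


Lemma leaves_uniq n t1 t2 : leaves_at T0 T n t1 -> leaves_at T0 T n t2 -> t1 = t2.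
Proof.
move=> [a1 [b1 c1]] [a2 [b2 c2]].
case: (ltgtP t1 t2) => // h.
  by have := c2 t1; rewrite a1 h => /(_ isT); rewrite ltNge b1.
by have := c1 t2; rewrite a2 h => /(_ isT); rewrite ltNge b2.
Qed.

Lemma Tprev_lt i n : T i (M i (T0 n)) < T0 n.
Proof.
rewrite lt_neqAle prev_le andbT; apply/eqP; exact: hdis0.
Qed.

Lemma D_arr n : D (T0 n) < n.
Proof.
pose i1 : 'I_c := [arg max_(i > i0) T i (M i (T0 n))]%O.
have hi1 : forall i, T i (M i (T0 n)) <= T i1 (M i1 (T0 n)).
  by rewrite /i1; case: arg_maxP => // i _ H j; apply: H.
pose s := Num.max (T0 (n - 1)) (T i1 (M i1 (T0 n))).
have hs1 : s < T0 n.
  rewrite gt_max Tprev_lt andbT (pp_ltE hT0); lia.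
have hs2 : T0 (n - 1) <= s by rewrite le_max lexx.
have hNs : N s = n - 1.
  by apply: li_eq => //; rewrite hs2 /= subrK.
have hMs : forall i, M i s = M i (T0 n).
  move=> i; apply: li_eq => //.
  rewrite (le_trans (hi1 i)) ?le_max ?lexx ?orbT //=.
  by apply: lt_trans hs1 _; apply: next_gt.
have hX : X (T0 n) - X s = 1.
  rewrite /X /SM (eq_bigr _ (fun i _ => hMs i)) hNs /N li_T //. ring.
have := Q_ge (ltW hs1); rewrite hX /D /N li_T // => h; lia.
Qed.

Lemma D_before n tau : D u < n -> n <= D t -> tau < P (jf n) -> D tau < n.
Proof.
move=> h1 h2 h3.
case: (ltP tau u) => htu.
  by apply: le_lt_trans h1; apply: D_mono; apply: ltW.
have [j hj] := P_locate htu.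
rewrite (D_loc hj) ltNge; apply/negP => hn.
have [_ h4] := jf_spec h2.
have := h4 _ hn; rewrite -P_leE => h5.
case/andP: hj => hj1 _.
by have := lt_le_trans (le_lt_trans hj1 h3) h5; rewrite ltxx.
Qed.

Lemma leaves_P n : D u < n -> n <= D t -> leaves_at T0 T n (P (jf n)).
Proof.
move=> h1 h2.
have hv := jf_val h1 h2.
have hcnt : forall y, cnt T0 (T0 n) y = N y - n by move=> y; rewrite /cnt li_T.
split.
  rewrite ltNge; apply/negP => h.
  by have := D_mono h; rewrite hv leNgt D_arr.
split.
  by rewrite hcnt; move: hv; rewrite /D /Q => hv; lia.
move=> tau /andP [_ htau]; rewrite hcnt.
by have := D_before h1 h2 htau; rewrite /D /Q; lia.
Qed.

Lemma P_point n : D u < n -> n <= D t ->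
  let x := P (jf n).-1 in let i := nsi x in
  P (jf n) = T i (M i x + 1).
Proof.
move=> h1 h2 x i.
have := jf_pos h1 h2; rewrite /i /x; case: (jf n) => [//|j] _ /=.
by [].
Qed.

Lemma Vserv_P n : D u < n -> n <= D t ->
  let x := P (jf n).-1 in let i := nsi x in
  Vserv T0 T n = T i (M i x + 1 + 1) - T i (M i x + 1).
Proof.
move=> h1 h2 x i.
have hp := P_point h1 h2; rewrite -/x -/i in hp.
have hl := leaves_P h1 h2.
apply: xget_unique.
  by exists i, (M i x + 1); rewrite -hp.
move=> v [i' [k' [hl' ->]]].
have e := leaves_uniq hl' hl; rewrite hp in e.
case: (eqVneq i' i) => [ei|ne]; last by case: (hdis ne e).
subst i'; have ek := pp_inj (hT i) e; by rewrite ek.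
Qed.


Lemma Vserv_ge0 n : 0 <= Vserv T0 T n.
Proof.
rewrite /Vserv; case: xgetP => // v _ [i [k [_ ->]]].
by rewrite subr_ge0 (pp_leE (hT i)); lia.
Qed.

Definition arrs (K : nat) : seq (R * R) :=
  [seq (T0 (last_idx T0 u + 1 + k%:Z), Vserv T0 T (last_idx T0 u + 1 + k%:Z)) | k <- iota 0 K].

Lemma arrs_nth K j : (j < K)%N ->
  nth (0,0) (arrs K) j = (T0 (last_idx T0 u + 1 + j%:Z), Vserv T0 T (last_idx T0 u + 1 + j%:Z)).
Proof. by move=> hj; rewrite /arrs (nth_map 0%N) ?size_iota // nth_iota. Qed.

Lemma size_arrs K : size (arrs K) = K.
Proof. by rewrite size_map size_iota. Qed.

Lemma first_ineq (F1 : seq R) K (t' : R) : size F1 = c ->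
  (count (fun s => (t' < s)%R) (fcfs_starts (nseq c u) (arrs K))
   <= count (fun s => (t' < s)%R) (fcfs_starts F1 (arrs K)))%N.
Proof.
move=> hF1.
have F10 : F1 != [::] by rewrite -size_eq0 hF1 -lt0n.
case: K => [//|K].
apply: count_mono_nth; first by rewrite !size_fcfs.
rewrite size_fcfs size_arrs => j hj.
apply: (cmp (sg := u) (Gs := fun j => fstate F1 (take j (arrs K.+1)))); last by rewrite size_arrs.
- move=> y uy; rewrite /= ?take0 /cle count_nseq.
  rewrite (_ : (u <= y) = true) // mul1n -hF1; exact: count_size.
- rewrite nth_starts ?size_arrs // arrs_nth //= le_max; apply/orP; left.
  by apply: ltW; rewrite (li_lt hT0); lia.
move=> k hk; rewrite size_arrs in hk.
have hG0 : fstate F1 (take k (arrs K.+1)) != [::] by apply: fstate_ne0.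
split.
- by rewrite nth_starts ?size_arrs // le_max lexx.
- move=> hk1; apply: starts_mono => //; rewrite ?size_arrs //.
    move=> m hm; rewrite !arrs_nth //; try lia.
    by rewrite /= (pp_leE hT0); lia.
  by move=> m hm; rewrite arrs_nth //; apply: Vserv_ge0.
- exists (head 0 (sort <=%R (fstate F1 (take k (arrs K.+1))))).
    exact: head_sort_mem.
  by rewrite nth_starts ?size_arrs // le_max lexx orbT.
- move=> y hy; rewrite fstate_takeS ?size_arrs //.
  rewrite [cle y (_ :: _)]/cle /= -/(cle y _) cle_behead_sort //.
  have hh : head 0 (sort <=%R (fstate F1 (take k (arrs K.+1)))) <= y.
    by apply: le_trans hy; rewrite nth_starts ?size_arrs // le_max lexx orbT.
  rewrite hh.
  have : (0 < cle y (fstate F1 (take k (arrs K.+1))))%N.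
    rewrite /cle -has_count; apply/hasP.
    by exists (head 0 (sort <=%R (fstate F1 (take k (arrs K.+1))))); first exact: head_sort_mem.
  case: (_ + _ <= y) => /=; lia.
Qed.



Definition Gv x := [seq T i (last_idx (T i) x + 1) | i <- enum 'I_c].

Lemma cle_Gv y x : cle y (Gv x) = (\sum_(i < c) nat_of_bool (T i (M i x + 1) <= y)%R)%N.
Proof.
rewrite /cle count_map -sum1_count big_enum_cond /= big_mkcond /=.
by apply: eq_bigr => i _; case: (_ <= y).
Qed.


Lemma second_ineq :
  ((count (fun s => t < s) (fcfs_starts [seq u + x | x <- sort <=%R [seq resid (T i) u | i <- enum 'I_c]]
     ([seq (u, Vserv T0 T (last_idx T0 u - (`|Qv T0 T u|%N)%:Z + 1 + k%:Z)) | k <- iota 0 `|Qv T0 T u|%N]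
      ++ arrs `|last_idx T0 t - last_idx T0 u|%N)))%:Z <= Qv T0 T t).
Proof.
set q := `|Qv T0 T u|%N.
have hq : q%:Z = Q u by have := Q_ge0 u; rewrite /q /Q; lia.
set F := [seq u + x | x <- _].
set init := [seq (u, _) | k <- iota 0 q].
set K := `|last_idx T0 t - last_idx T0 u|%N.
set cs := init ++ arrs K.
have hNt : N u <= N t by apply: N_mono.
have hK : K%:Z = N t - N u by move: hNt; rewrite /K /N; lia.
have hDt : D u <= D t by apply: D_mono.
have hQt := Q_ge0 t.
have hsize : size cs = (q + K)%N by rewrite size_cat size_map size_iota size_arrs.
set J := `|D t - D u|%N.
have hJZ : J%:Z = D t - D u by rewrite /J; lia.
have hJ : (J <= size cs)%N.
  rewrite hsize -lez_nat; move: hJZ hq hK hQt; rewrite /D /Q /N; lia.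
have hcs : forall j, (j < size cs)%N ->
   (nth (0,0) cs j).2 = Vserv T0 T (D u + 1 + j%:Z) /\
   (nth (0,0) cs j).1 <= Num.max u (T0 (D u + 1 + j%:Z)).
  move=> j hj; rewrite /cs nth_cat size_map size_iota.
  case: ltnP => hjq.
    rewrite /init (nth_map 0%N) ?size_iota // nth_iota //=.
    split; last by rewrite le_max lexx.
    congr (Vserv T0 T _); move: hq; rewrite /D /Q /N; lia.
  have hjK : (j - q < K)%N by move: hj; rewrite hsize; lia.
  rewrite arrs_nth //=.
  have -> : last_idx T0 u + 1 + (j - q)%N%:Z = D u + 1 + j%:Z.
    by move: hq; rewrite /D /Q /N; lia.
  by split => //; rewrite le_max lexx orbT.
pose sj j := P (jf (D u + 1 + j%:Z)).
pose Gs j := Gv (P (jf (D u + j%:Z))).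
have Hpre : forall j, (j < J)%N -> nth 0 (fcfs_starts F (take J cs)) j <= sj j.
  move=> j0 hj0.
  apply: (cmp (sg := u) (s := sj) (Gs := Gs)); last by rewrite size_takel.
  - move=> y uy; rewrite /Gs addr0 jf_du P0.
    have e : perm_eq F (Gv u).
      rewrite /F /Gv; apply: perm_trans (perm_map _ (permEl (perm_sort _ _))) _.
      rewrite -map_comp; rewrite (eq_map (g := fun i => T i (last_idx (T i) u + 1))) //.
      by move=> i; rewrite /= /resid addrC subrK.
    by rewrite /cle (permP e).

  - by rewrite /sj; apply: le_trans (_ : P 0 <= _); rewrite ?P_leE.
  move=> j; rewrite size_takel // => hj.
  set n := D u + 1 + j%:Z.
  have hn1 : D u < n by rewrite /n; lia.
  have hn2 : n <= D t by rewrite /n; move: hJZ; lia.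
  rewrite nth_take //.
  have [hv ha] := hcs j (leq_trans hj hJ).
  have hl := leaves_P hn1 hn2.
  have hp := P_point hn1 hn2.
  set x := P (jf n).-1 in hp; set i := nsi x in hp.
  set xp := P (jf (D u + j%:Z)).
  have hjlt : (jf (D u + j%:Z) < jf n)%N by apply: jf_lt; rewrite /n; lia.
  have hxp : xp <= x by rewrite /xp /x P_leE; move: hjlt; lia.
  have hg : T i (M i xp + 1) <= sj j.
    rewrite /sj -/n hp (pp_leE (hT i)); have := li_mono (hT i) hxp; rewrite /M /i; lia.
  split.
  - apply: le_trans ha _; rewrite ge_max; apply/andP; split.
      by apply: le_trans (_ : P 0 <= _); rewrite ?P_leE.
    by case: hl => /ltW.
  - move=> hj1; rewrite /sj P_leE; apply: ltnW; apply: jf_lt; lia.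
  - exists (T i (M i xp + 1)) => //.
    by apply/mapP; exists i; rewrite ?mem_enum.
  move=> y hy.
  have hx'i : M i (P (jf n)) = M i x + 1 by rewrite hp /M li_T.
  have hsv : sj j + (nth (0, 0) cs j).2 = T i (M i x + 1 + 1).
    by rewrite hv -/n (Vserv_P hn1 hn2) -/x -/i /sj -/n hp addrC subrK.
  rewrite hsv /Gs.
  have -> : D u + (j.+1)%:Z = n by rewrite /n; lia.
  rewrite !cle_Gv (bigD1 i) //= [X in (_ <= X + _)%N](bigD1 i) //= -/xp hx'i.
  have -> : (T i (M i xp + 1) <= y) = true by apply: le_trans hg hy.
  have hxx : xp <= P (jf n) by rewrite /xp P_leE; apply: ltnW.
  suff : (\sum_(i' < c | i' != i) nat_of_bool (T i' (M i' (P (jf n)) + 1) <= y)%R <=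
          \sum_(i' < c | i' != i) nat_of_bool (T i' (M i' xp + 1) <= y)%R)%N.
    move=> h; case: (T i (M i x + 1 + 1) <= y)%R => /=.
      by rewrite leq_add2r leq_add2l.
    by rewrite add0n addn0 addnC leq_add2l.
  apply: leq_sum => i' _.
  case: (boolP (T i' (M i' (P (jf n)) + 1) <= y)) => //= h.
  rewrite (_ : (T i' (M i' xp + 1) <= y) = true) //.
  apply: le_trans h; rewrite (pp_leE (hT i')); have := li_mono (hT i') hxx; rewrite /M; lia.
have Hc : (count (fun s => (t < s)%R) (fcfs_starts F cs) <= size (fcfs_starts F cs) - J)%N.
  apply: count_prefix; first by rewrite size_fcfs.
  move=> j hj; rewrite -leNgt.
  rewrite -(cat_take_drop J cs) fcfs_cat nth_cat size_fcfs (size_takel hJ) hj.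
  apply: le_trans (Hpre j hj) _; apply: jf_le_t.
  by move: hJZ; lia.
rewrite size_fcfs hsize in Hc.
apply: le_trans (_ : ((q + K - J)%N)%:Z <= _); first by rewrite lez_nat.
move: hJZ hq hK; rewrite /D /Q /N; lia.
Qed.

Lemma main_sec :
  let q : nat := `|Qv T0 T u|%N in
  let r : seq R := sort <=%R [seq resid (T i) u | i <- enum 'I_c] in
  let e : R := u - T0 (last_idx T0 u) in
    (Qstd T0 T u 0 (nseq c 0%R) e (t - u) <= Qstd T0 T u q r e (t - u))%N /\
    ((Qstd T0 T u q r e (t - u))%:Z <= Qv T0 T t).
Proof.
move=> q r e.
have ht : u + (t - u) = t by rewrite addrC subrK.
rewrite /Qstd ht.
split; last exact: second_ineq.
rewrite map_nseq addr0 (_ : [seq _ | k <- iota 0 0] = [::]) // cat0s.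
rewrite fcfs_cat count_cat; apply: leq_trans (leq_addl _ _).
rewrite -/(arrs _).
apply: first_ineq.
have hr : size [seq u + x | x <- r] = c by rewrite size_map /r size_sort size_map size_enum_ord.
have hr0 : [seq u + x | x <- r] != [::] by rewrite -size_eq0 hr -lt0n.
by rewrite size_fstate.
Qed.

End Vac.

Theorem lemma3 (R : realType) (c : nat) (T0 : int -> R) (T : 'I_c -> int -> R)
  (hc : (0 < c)%N)
  (hT0 : point_process T0)
  (hT : forall i, point_process (T i))
  (hdis0 : forall (i : 'I_c) (n m : int), T i n <> T0 m)
  (hdis : forall (i j : 'I_c) (n m : int), i != j -> T i n <> T j m)
  (hstab : forall t : R, exists k : int, is_Qv T0 T t k)
  (u : R) :
  let q : nat := `|Qv T0 T u|%N in
  let r : seq R := sort <=%R [seq resid (T i) u | i <- enum 'I_c] in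
  let e : R := u - T0 (last_idx T0 u) in
  forall t : R, u <= t ->
    (Qstd T0 T u 0 (nseq c 0%R) e (t - u) <= Qstd T0 T u q r e (t - u))%N /\
    ((Qstd T0 T u q r e (t - u))%:Z <= Qv T0 T t).
Proof.
move=> q r e t hut.
exact: (main_sec hc hT0 hT hdis0 hdis hstab hut).
Qed.
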